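(* Let $A>0$ and let $k_0$ be the largest integer strictly smaller than $\sigma$. Let $\phi(\cdot;A)$ be the solution of $$(\phi^m)''+\frac{N-1}{\xi}(\phi^m)'+\alpha\phi+\beta\xi\phi'=0,\qquad \phi(0)=A,\ \phi'(0)=0,$$ and let $B_j$ be the Taylor coefficients of $\phi^m(\cdot;A)$ at $\xi=0$. Then, as $\xi\to0$, $$f^m(\xi;A)=\sum_{j=0}^{k_0+2}B_j\xi^j+\frac{A^p}{(\sigma+2)(\sigma+N)}\xi^{\sigma+2}+o(\xi^{\sigma+2})\quad\text{if }\sigma\notin\mathbb{N},$$ and $$f^m(\xi;A)=\sum_{j=0}^{k_0+3}B_j\xi^j+\frac{A^p}{(\sigma+2)(\sigma+N)}\xi^{\sigma+2}+o(\xi^{\sigma+2})\quad\text{if }\sigma\in\mathbb{N}\ (k_0=\sigma-1).$$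
   Context: Let $N\geq1$, $m>1$, $\sigma>0$, $p>m$, $L=\sigma(m-1)+2(p-1)$, $\alpha=(\sigma+2)/L$, $\beta=(p-m)/L$. For $A>0$, $f(\cdot;A)$ denotes the unique solution of $$(f^m)''+\frac{N-1}{\xi}(f^m)'+\alpha f+\beta\xi f'-\xi^{\sigma}f^p=0,\qquad f(0)=A,\ f'(0)=0,$$ positive on a maximal interval $[0,\xi_{\max}(A))$ with $f^m\in C^2$ there. *)

(* Defs.v *)
From Stdlib Require Import Reals Lra.
From Coquelicot Require Import Coquelicot.
Open Scope R_scope.

Definition Lc (m sigma p : R) : R := sigma * (m - 1) + 2 * (p - 1).
Definition alpha (m sigma p : R) : R := (sigma + 2) / Lc m sigma p.
Definition beta (m sigma p : R) : R := (p - m) / Lc m sigma p.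

Definition is_f_solution (N : nat) (m sigma p A d : R) (f : R -> R) : Prop :=
  let u := fun x => Rpower (f x) m in
  0 < d /\
  (forall x, 0 <= x < d -> 0 < f x) /\
  f 0 = A /\
  filterlim (fun x => (f x - f 0) / x) (at_right 0) (locally 0) /\
  (forall x, 0 < x < d ->
     ex_derive f x /\ ex_derive u x /\ ex_derive (Derive u) x /\
     Derive_n u 2 x + (INR N - 1) / x * Derive u x
       + alpha m sigma p * f x + beta m sigma p * x * Derive f x
       - Rpower x sigma * Rpower (f x) p = 0) /\
  (* f^m is C^2 up to xi = 0: u, u', u'' extend continuously to 0,
     the extensions being the one-sided derivatives at 0 *)
  (exists l1 l2 : R,
     filterlim (Derive u) (at_right 0) (locally l1) /\
     filterlim (Derive_n u 2) (at_right 0) (locally l2) /\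
     filterlim (fun x => (u x - u 0) / x) (at_right 0) (locally l1) /\
     filterlim (fun x => (Derive u x - l1) / x) (at_right 0) (locally l2)).

(* phi is a solution of the source-free problem
     (phi^m)'' + (N-1)/xi (phi^m)' + alpha phi + beta xi phi' = 0,
     phi(0) = A, phi'(0) = 0,
   on (0,d), positive, with phi^m (extended to (-d,d)) infinitely
   differentiable, so that its Taylor coefficients at 0 make sense. *)
Definition is_phi_solution (N : nat) (m sigma p A d : R) (phi : R -> R) : Prop :=
  let g := fun x => Rpower (phi x) m in
  0 < d /\
  (forall x, - d < x < d -> 0 < phi x) /\
  (forall n x, - d < x < d -> ex_derive_n g n x) /\
  phi 0 = A /\
  ex_derive phi 0 /\ Derive phi 0 = 0 /\
  (forall x, 0 < x < d ->
     ex_derive phi x /\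
     Derive_n g 2 x + (INR N - 1) / x * Derive g x
       + alpha m sigma p * phi x + beta m sigma p * x * Derive phi x = 0).

Definition taylorB (m : R) (phi : R -> R) (j : nat) : R :=
  Derive_n (fun x => Rpower (phi x) m) j 0 / INR (Factorial.fact j).

Definition little_o_right (h : R -> R) (e : R) : Prop :=
  filterlim (fun x => h x / Rpower x e) (at_right 0) (locally 0).

(* Main.v *)
Require Import Defs.
From Stdlib Require Import Reals Lra Lia.
From Coquelicot Require Import Coquelicot.
Open Scope R_scope.

Definition rlim (h : R -> R) (L : R) : Prop :=
  forall eps, 0 < eps -> exists del, 0 < del /\
    forall x, 0 < x < del -> Rabs (h x - L) < eps.

Lemma ball_R (x e y : R) : ball x e y <-> Rabs (y - x) < e.
Proof. reflexivity. Qed.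

Lemma rlim_of_filterlim h L :
  filterlim h (at_right 0) (locally L) -> rlim h L.
Proof.
  intros H eps Heps.
  destruct (proj1 (filterlim_locally h L) H (mkposreal eps Heps)) as [d Hd].
  exists d; split; [apply cond_pos|].
  intros x [H1 H2]. apply (Hd x); [apply ball_R; rewrite Rminus_0_r, Rabs_pos_eq; lra | lra].
Qed.

Lemma filterlim_of_rlim h L :
  rlim h L -> filterlim h (at_right 0) (locally L).
Proof.
  intros H. apply filterlim_locally. intros eps.
  destruct (H eps (cond_pos eps)) as [d [Hd1 Hd2]].
  exists (mkposreal d Hd1). intros y Hy Hy0. apply ball_R.
  apply Hd2. apply ball_R in Hy. simpl in Hy0.
  change (Rabs (y - 0) < d) in Hy. rewrite Rminus_0_r, Rabs_pos_eq in Hy; lra.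
Qed.

Lemma rlim_of_cont h : continuous h 0 -> rlim h (h 0).
Proof.
  intros H eps Heps.
  destruct (proj1 (filterlim_locally h (h 0)) H (mkposreal eps Heps)) as [d Hd].
  exists d; split; [apply cond_pos|].
  intros x [H1 H2]. apply (Hd x). apply ball_R; rewrite Rminus_0_r, Rabs_pos_eq; lra.
Qed.

Lemma rlim_unique h L1 L2 : rlim h L1 -> rlim h L2 -> L1 = L2.
Proof.
  intros H1 H2. apply Rminus_diag_uniq. apply Rabs_eq_0.
  destruct (Rle_lt_or_eq_dec 0 (Rabs (L1 - L2)) (Rabs_pos _)) as [Hp|Hp]; [|auto].
  exfalso. set (e := Rabs (L1 - L2) / 2).
  destruct (H1 e ltac:(unfold e; lra)) as [d1 [Hd1 K1]].
  destruct (H2 e ltac:(unfold e; lra)) as [d2 [Hd2 K2]].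
  set (x := Rmin d1 d2 / 2).
  assert (0 < x < d1) by (unfold x; generalize (Rmin_l d1 d2) (Rmin_r d1 d2); unfold Rmin; destruct Rle_dec; lra).
  assert (0 < x < d2) by (unfold x; generalize (Rmin_l d1 d2) (Rmin_r d1 d2); unfold Rmin; destruct Rle_dec; lra).
  specialize (K1 x H). specialize (K2 x H0).
  assert (Rabs (L1 - L2) <= Rabs (h x - L2) + Rabs (h x - L1)).
  { replace (L1 - L2) with ((h x - L2) - (h x - L1)) by ring. unfold Rminus at 1. rewrite <- (Rabs_Ropp (h x - L1)). apply Rabs_triang. }
  unfold e in *; lra.
Qed.

Lemma cont_of_derive F t l : is_derive F t l -> continuity_pt F t.
Proof.
  intros H. apply continuity_pt_filterlim. apply (ex_derive_continuous F t).
  exists l; exact H.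
Qed.

Lemma BL F F' x K : 0 < x ->
  (forall t, 0 < t <= x -> is_derive F t (F' t)) ->
  (forall t, 0 < t <= x -> Rabs (F' t) <= K) ->
  rlim F 0 -> Rabs (F x) <= K * x.
Proof.
  intros Hx HD HB HL.
  destruct (Rle_lt_dec (Rabs (F x)) (K * x)) as [Hle|Hlt]; [exact Hle|exfalso].
  destruct (HL (Rabs (F x) - K * x) ltac:(lra)) as [d [Hd Hd2]].
  set (y := Rmin d x / 2).
  assert (Hy : 0 < y < x /\ y < d) by (unfold y; generalize (Rmin_l d x) (Rmin_r d x); unfold Rmin; destruct Rle_dec; lra).
  destruct (MVT_gen F y x F') as [c [Hc Heq]].
  - intros t Ht. rewrite Rmin_left in Ht by lra. rewrite Rmax_right in Ht by lra.
    apply HD; lra.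
  - intros t Ht. rewrite Rmin_left in Ht by lra. rewrite Rmax_right in Ht by lra.
    apply (cont_of_derive F t (F' t)). apply HD; lra.
  - rewrite Rmin_left in Hc by lra. rewrite Rmax_right in Hc by lra.
    assert (H1 := Hd2 y ltac:(lra)). rewrite Rminus_0_r in H1.
    assert (H2 := HB c ltac:(lra)).
    assert (K0 : 0 <= K) by (generalize (Rabs_pos (F' c)); lra).
    assert (F x = F y + F' c * (x - y)) by lra.
    assert (Rabs (F x) <= Rabs (F y) + Rabs (F' c) * (x - y)).
    { rewrite H. eapply Rle_trans; [apply Rabs_triang|]. rewrite Rabs_mult.
      rewrite (Rabs_pos_eq (x - y)) by lra. lra. }
    assert (Rabs (F' c) * (x - y) <= K * x) by nra.
    lra.
Qed.

Lemma exp_mono a b : a <= b -> exp a <= exp b.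
Proof. intros [H|H]; [left; apply exp_increasing; exact H| subst; lra]. Qed.

Lemma Rpow_pos y r : 0 < Rpower y r.
Proof. unfold Rpower; apply exp_pos. Qed.

Lemma Rpow_bound y r c C : 0 < c -> c <= y <= C ->
  Rpower y r <= Rpower c r + Rpower C r.
Proof.
  intros Hc Hy. assert (Lc := ln_le c y Hc (proj1 Hy)).
  assert (LC := ln_le y C ltac:(lra) (proj2 Hy)).
  generalize (Rpow_pos c r) (Rpow_pos C r). intros P1 P2.
  unfold Rpower in *. destruct (Rle_lt_dec 0 r).
  - assert (exp (r * ln y) <= exp (r * ln C)) by (apply exp_mono; nra). lra.
  - assert (exp (r * ln y) <= exp (r * ln c)) by (apply exp_mono; nra). lra.
Qed.

Lemma is_derive_Rpower t r : 0 < t ->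
  is_derive (fun x => Rpower x r) t (r * Rpower t (r - 1)).
Proof. intros H. apply is_derive_Reals. apply derivable_pt_lim_power; exact H. Qed.

Lemma is_derive_Rpower_comp F x l r : 0 < F x -> is_derive F x l ->
  is_derive (fun t => Rpower (F t) r) x (r * Rpower (F x) (r - 1) * l).
Proof.
  intros Hp HD.
  assert (H := is_derive_comp (fun y => Rpower y r) F x _ _ (is_derive_Rpower (F x) r Hp) HD).
  replace (r * Rpower (F x) (r - 1) * l) with (scal l (r * Rpower (F x) (r - 1))).
  - exact H.
  - unfold scal; simpl. unfold mult; simpl. ring.
Qed.

Lemma Rpow_lip y z r c C : 0 < c -> c <= y <= C -> c <= z <= C ->
  Rabs (Rpower y r - Rpower z r) <=
  Rabs r * (Rpower c (r - 1) + Rpower C (r - 1)) * Rabs (y - z).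
Proof.
  intros Hc Hy Hz.
  assert (Hm : c <= Rmin z y) by (apply Rmin_glb; lra).
  assert (HM : Rmax z y <= C) by (apply Rmax_lub; lra).
  destruct (MVT_gen (fun t => Rpower t r) z y (fun t => r * Rpower t (r - 1))) as [e [He Heq]].
  - intros t Ht. apply is_derive_Rpower; lra.
  - intros t Ht. apply (cont_of_derive _ t (r * Rpower t (r - 1))). apply is_derive_Rpower; lra.
  - rewrite Heq. rewrite !Rabs_mult.
    assert (B := Rpow_bound e (r - 1) c C Hc ltac:(lra)).
    rewrite (Rabs_pos_eq (Rpower e (r - 1))) by (left; apply Rpow_pos).
    rewrite <- (Rabs_Ropp (y - z)) at 1. replace (- (y - z)) with (z - y) by ring.
    rewrite (Rabs_minus_sym z y).
    generalize (Rabs_pos r) (Rabs_pos (y - z)). intros. 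
    apply Rmult_le_compat_r; [lra|]. apply Rmult_le_compat_l; lra.
Qed.

Lemma rlim_mult F G a b : rlim F a -> rlim G b -> rlim (fun x => F x * G x) (a * b).
Proof.
  intros HF HG. apply rlim_of_filterlim.
  apply (filterlim_comp_2 F G Rmult (F:=at_right 0) (G:=locally a) (H:=locally b)).
  - apply filterlim_of_rlim; exact HF.
  - apply filterlim_of_rlim; exact HG.
  - apply (filterlim_mult (K:=R_AbsRing) a b).
Qed.

Lemma rlim_plus F G a b : rlim F a -> rlim G b -> rlim (fun x => F x + G x) (a + b).
Proof.
  intros HF HG. apply rlim_of_filterlim.
  apply (filterlim_comp_2 F G Rplus (F:=at_right 0) (G:=locally a) (H:=locally b)).
  - apply filterlim_of_rlim; exact HF.
  - apply filterlim_of_rlim; exact HG.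
  - apply (filterlim_plus (K:=R_AbsRing) (V:=R_NormedModule) a b).
Qed.

Lemma rlim_const c : rlim (fun _ => c) c.
Proof. intros e He. exists 1; split; [lra|]. intros. rewrite Rminus_diag, Rabs_R0; lra. Qed.

Lemma rlim_ext F G a : rlim F a -> (forall x, 0 < x -> F x = G x) -> rlim G a.
Proof.
  intros H E e He. destruct (H e He) as [d [Hd K]]. exists d; split; auto.
  intros x Hx. rewrite <- E by lra. auto.
Qed.

Lemma rlim_pow n : rlim (fun x => x ^ n) (0 ^ n).
Proof.
  apply (rlim_of_cont (fun x => x ^ n)).
  apply (ex_derive_continuous (K:=R_AbsRing) (V:=R_NormedModule)). auto_derive; auto.
Qed.

Lemma rlim_ext_loc F G a d : 0 < d -> rlim F a -> (forall x, 0 < x < d -> F x = G x) -> rlim G a.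
Proof.
  intros Hd0 H E e He. destruct (H e He) as [d1 [Hd K]]. exists (Rmin d d1); split.
  - apply Rmin_glb_lt; lra.
  - intros x Hx. assert (x < d) by (generalize (Rmin_l d d1); lra).
    assert (x < d1) by (generalize (Rmin_r d d1); lra).
    rewrite <- E by lra. apply K; lra.
Qed.

Lemma Rpow_mono_base t x b : 0 < t <= x -> 0 <= b -> Rpower t b <= Rpower x b.
Proof. intros; apply Rle_Rpower_l; lra. Qed.

Lemma Rpow_le_exp x a b : 0 < x <= 1 -> b <= a -> Rpower x a <= Rpower x b.
Proof.
  intros Hx Hab. unfold Rpower. apply exp_mono.
  assert (ln x <= 0) by (rewrite <- ln_1; apply ln_le; lra). nra.
Qed.

Lemma Rpow_plus1 x a : 0 < x -> Rpower x (a + 1) = Rpower x a * x.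
Proof. intros. rewrite Rpower_plus, Rpower_1; auto. Qed.

Lemma Rpow_lt_1 x e : 0 < x < 1 -> 0 < e -> Rpower x e < 1.
Proof.
  intros Hx He. unfold Rpower. rewrite <- exp_0. apply exp_increasing.
  assert (ln x < 0) by (rewrite <- ln_1; apply ln_increasing; lra). nra.
Qed.

Lemma rlim_Rpow e : 0 < e -> rlim (fun x => Rpower x e) 0.
Proof.
  intros He eps Heps. exists (Rpower eps (/ e)). split; [apply Rpow_pos|].
  intros x Hx. rewrite Rminus_0_r, Rabs_pos_eq by (left; apply Rpow_pos).
  replace eps with (Rpower (Rpower eps (/ e)) e).
  - apply Rlt_Rpower_l; lra.
  - rewrite Rpower_mult. replace (/ e * e) with 1 by (field; lra). apply Rpower_1; lra.
Qed.

Definition Hyp (d sig K Q0 : R) (n0 : nat) (w w1 RR Q E : R -> R) : Prop :=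
  (0 < d <= 1) /\ 0 < sig /\
  (forall x, 0 < x < d -> is_derive w x (w1 x)) /\
  (forall x, 0 < x < d -> is_derive (fun t => t ^ n0 * w1 t) x (x ^ n0 * RR x)) /\
  rlim w 0 /\ rlim w1 0 /\
  (forall x, 0 < x < d -> RR x = Rpower x sig * Q x + E x) /\
  (forall x, 0 < x < d -> Rabs (Q x) <= K /\
       Rabs (E x) <= K * (Rabs (w x) + x * Rabs (w1 x))) /\
  rlim Q Q0.

Definition PP (d : R) (w w1 : R -> R) (a : R) : Prop :=
  exists M del, 0 <= M /\ 0 < del <= d /\ forall x, 0 < x < del ->
    Rabs (w x) <= M * Rpower x a /\ x * Rabs (w1 x) <= M * Rpower x a.

Lemma rlim_W n0 w1 : rlim w1 0 -> rlim (fun t => t ^ n0 * w1 t) 0.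
Proof.
  intros H. assert (H2 := rlim_mult _ _ _ _ (rlim_pow n0) H). rewrite Rmult_0_r in H2. exact H2.
Qed.

Lemma boot_step d sig K Q0 n0 w w1 RR Q E a :
  Hyp d sig K Q0 n0 w w1 RR Q E -> 0 <= a <= sig -> PP d w w1 a -> PP d w w1 (a + 2).
Proof.
  intros (Hd & Hs & Hw & HW & Lw & Lw1 & HR & HB & LQ) Ha (M & del & HM & Hdel & HP).
  assert (HK : 0 <= K) by (destruct (HB (d/2) ltac:(lra)) as [B1 _]; generalize (Rabs_pos (Q (d/2))); lra).
  set (K1 := K * (1 + 2 * M)).
  assert (HK1 : 0 <= K1) by (unfold K1; nra).
  assert (BR : forall x, 0 < x < del -> Rabs (RR x) <= K1 * Rpower x a).
  { intros x Hx. destruct (HP x Hx) as [P1 P2]. destruct (HB x ltac:(lra)) as [B1 B2].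
    rewrite HR by lra.
    assert (Rpower x sig <= Rpower x a) by (apply Rpow_le_exp; lra).
    assert (Rabs (Rpower x sig * Q x) <= Rpower x a * K).
    { rewrite Rabs_mult, Rabs_pos_eq by (left; apply Rpow_pos).
      apply Rmult_le_compat; try lra; [left; apply Rpow_pos| apply Rabs_pos]. }
    assert (Rabs (E x) <= K * (2 * M * Rpower x a)) by (eapply Rle_trans; [exact B2|]; apply Rmult_le_compat_l; lra).
    eapply Rle_trans; [apply Rabs_triang|]. unfold K1. lra. }
  assert (A1 : forall x, 0 < x < del -> Rabs (w1 x) <= K1 * Rpower x (a + 1)).
  { intros x Hx.
    assert (H := BL (fun t => t ^ n0 * w1 t) (fun t => t ^ n0 * RR t) x
                   (x ^ n0 * (K1 * Rpower x a)) (proj1 Hx)).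
    assert (Hxn : 0 < x ^ n0) by (apply pow_lt; lra).
    assert (H' : Rabs (x ^ n0 * w1 x) <= x ^ n0 * (K1 * Rpower x a) * x).
    { apply H.
      - intros t Ht. apply HW; lra.
      - intros t Ht. rewrite Rabs_mult, (Rabs_pos_eq (t ^ n0)) by (apply pow_le; lra).
        apply Rmult_le_compat; [apply pow_le; lra | apply Rabs_pos | apply pow_incr; lra |].
        eapply Rle_trans; [apply BR; lra|]. apply Rmult_le_compat_l; auto.
        apply Rpow_mono_base; lra.
      - apply rlim_W; auto. }
    rewrite Rabs_mult, (Rabs_pos_eq (x ^ n0)) in H' by lra.
    rewrite Rpow_plus1 by lra.
    apply (Rmult_le_reg_l (x ^ n0)); auto. lra. }
  exists K1, del. split; [auto|split; [auto|]].
  intros x Hx. split.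
  - replace (a + 2) with ((a + 1) + 1) by ring. rewrite Rpow_plus1 by lra.
    rewrite <- Rmult_assoc.
    apply (BL w w1 x (K1 * Rpower x (a + 1))); [lra| | |auto].
    + intros t Ht. apply Hw; lra.
    + intros t Ht. eapply Rle_trans; [apply A1; lra|]. apply Rmult_le_compat_l; auto.
      apply Rpow_mono_base; lra.
  - replace (a + 2) with ((a + 1) + 1) by ring. rewrite Rpow_plus1 by lra.
    assert (H := A1 x Hx). nra.
Qed.

Lemma boot_mono d w w1 a b : d <= 1 -> PP d w w1 a -> b <= a -> PP d w w1 b.
Proof.
  intros Hd1 (M & del & HM & Hdel & HP) Hab. exists M, del. split; [auto|split; [auto|]].
  intros x Hx. destruct (HP x Hx) as [P1 P2].
  assert (Rpower x a <= Rpower x b) by (apply Rpow_le_exp; lra).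
  split; nra.
Qed.

Lemma boot0 d sig K Q0 n0 w w1 RR Q E :
  Hyp d sig K Q0 n0 w w1 RR Q E -> PP d w w1 0.
Proof.
  intros (Hd & Hs & Hw & HW & Lw & Lw1 & _).
  destruct (Lw 1 ltac:(lra)) as [d1 [Hd1 K1]].
  destruct (Lw1 1 ltac:(lra)) as [d2 [Hd2 K2]].
  exists 1, (Rmin d (Rmin d1 d2)). split; [lra|split].
  - split; [repeat apply Rmin_glb_lt; lra| apply Rmin_l].
  - intros x Hx. rewrite Rpower_O by lra.
    generalize (Rmin_l d (Rmin d1 d2)) (Rmin_r d (Rmin d1 d2)) (Rmin_l d1 d2) (Rmin_r d1 d2). intros.
    specialize (K1 x ltac:(lra)). specialize (K2 x ltac:(lra)).
    rewrite Rminus_0_r in K1, K2. generalize (Rabs_pos (w1 x)). intros. split; nra.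
Qed.

Lemma boot_all d sig K Q0 n0 w w1 RR Q E n :
  Hyp d sig K Q0 n0 w w1 RR Q E -> PP d w w1 (Rmin (2 * INR n) (sig + 2)).
Proof.
  intros H. assert (Hd := proj1 H). assert (Hs := proj1 (proj2 H)).
  induction n as [|n IH].
  - simpl. rewrite Rmin_left by lra. replace (2 * 0) with 0 by ring. eapply boot0; eauto.
  - set (a := Rmin (2 * INR n) (sig + 2)) in IH.
    assert (Ha0 : 0 <= a) by (unfold a; apply Rmin_glb; [generalize (pos_INR n)|]; lra).
    assert (P1 := boot_mono d w w1 a (Rmin a sig) ltac:(lra) IH (Rmin_l a sig)).
    assert (P2 := boot_step d sig K Q0 n0 w w1 RR Q E (Rmin a sig) H
                   ltac:(split; [apply Rmin_glb; lra| apply Rmin_r]) P1).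
    replace (Rmin (2 * INR (S n)) (sig + 2)) with (Rmin a sig + 2); [exact P2|].
    unfold a. rewrite S_INR. unfold Rmin. repeat destruct Rle_dec; lra.
Qed.

Lemma is_derive_sub f g x a b : is_derive f x a -> is_derive g x b ->
  is_derive (fun t => f t - g t) x (a - b).
Proof. intros Ha Hb. exact (is_derive_minus f g x a b Ha Hb). Qed.

Lemma is_derive_cmul_Rpow x c e : 0 < x ->
  is_derive (fun t => c * Rpower t e) x (c * (e * Rpower x (e - 1))).
Proof. intros. apply is_derive_scal. apply is_derive_Rpower; auto. Qed.

Lemma rlim_sub_cpow F c e : 0 < e -> rlim F 0 -> rlim (fun t => F t - c * Rpower t e) 0.
Proof.
  intros He HF.
  assert (H := rlim_plus _ _ _ _ HF (rlim_mult _ _ _ _ (rlim_const (- c)) (rlim_Rpow e He))).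
  replace (0 + - c * 0) with 0 in H by ring.
  eapply rlim_ext; [exact H|]. intros; simpl; ring.
Qed.

Lemma w_asym d sig K Q0 n0 w w1 RR Q E :
  Hyp d sig K Q0 n0 w w1 RR Q E -> (exists n, sig < 2 * INR n) ->
  rlim (fun x => (w x - Q0 / ((sig + 2) * (sig + (INR n0 + 1))) * Rpower x (sig + 2))
                 / Rpower x (sig + 2)) 0.
Proof.
  intros H [n Hn].
  assert (PA := boot_all d sig K Q0 n0 w w1 RR Q E n H).
  set (a := Rmin (2 * INR n) (sig + 2)) in PA.
  destruct H as (Hd & Hs & Hw & HW & Lw & Lw1 & HR & HB & LQ).
  assert (Hasig : sig < a) by (unfold a; unfold Rmin; destruct Rle_dec; lra).
  assert (HK : 0 <= K) by (destruct (HB (d/2) ltac:(lra)) as [B1 _]; generalize (Rabs_pos (Q (d/2))); lra).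
  assert (Hn0 : 0 <= INR n0) by apply pos_INR.
  assert (LE : rlim (fun x => E x / Rpower x sig) 0).
  { intros eps Heps. destruct PA as (M & del & HM & Hdel & HP).
    destruct (rlim_Rpow (a - sig) ltac:(lra) (eps / (2 * K * M + 1))) as [d1 [Hd1 K1]].
    { apply Rdiv_lt_0_compat; nra. }
    exists (Rmin del d1). split; [apply Rmin_glb_lt; lra|].
    intros x Hx. generalize (Rmin_l del d1) (Rmin_r del d1); intros.
    destruct (HP x ltac:(lra)) as [P1 P2]. destruct (HB x ltac:(lra)) as [_ B2].
    specialize (K1 x ltac:(lra)). rewrite Rminus_0_r, Rabs_pos_eq in K1 by (left; apply Rpow_pos).
    assert (Ea : Rpower x a = Rpower x sig * Rpower x (a - sig)).
    { rewrite <- Rpower_plus. f_equal; ring. }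
    assert (Hps := Rpow_pos x sig). assert (Hpa := Rpow_pos x (a - sig)).
    rewrite Rminus_0_r. unfold Rdiv. rewrite Rabs_mult, Rabs_inv, (Rabs_pos_eq (Rpower x sig)) by lra.
    assert (Rabs (E x) <= 2 * K * M * Rpower x sig * Rpower x (a - sig)).
    { assert (Rabs (w x) + x * Rabs (w1 x) <= 2 * M * Rpower x a) by lra.
      eapply Rle_trans; [exact B2|].
      replace (2 * K * M * Rpower x sig * Rpower x (a - sig)) with (K * (2 * M * Rpower x a)) by (rewrite Ea; ring).
      apply Rmult_le_compat_l; lra. }
    assert (2 * K * M * Rpower x (a - sig) < eps).
    { apply (Rmult_lt_compat_l (2 * K * M + 1)) in K1; [|nra].
      replace ((2 * K * M + 1) * (eps / (2 * K * M + 1))) with eps in K1 by (field; nra). nra. }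
    apply (Rmult_lt_reg_r (Rpower x sig)); auto.
    rewrite Rmult_assoc, Rinv_l by lra. nra. }
  assert (LR : rlim (fun x => RR x / Rpower x sig) Q0).
  { assert (H := rlim_plus _ _ _ _ LQ LE). rewrite Rplus_0_r in H.
    apply (rlim_ext_loc _ _ _ d (proj1 Hd) H). intros x Hx. rewrite HR by lra.
    field. apply Rgt_not_eq, Rpow_pos. }
  set (L1 := Q0 / (sig + (INR n0 + 1))).
  assert (S1 : forall eps, 0 < eps -> exists del, 0 < del /\ forall x, 0 < x < del ->
             Rabs (w1 x - L1 * Rpower x (sig + 1)) <= eps * Rpower x (sig + 1)).
  { intros eps Heps. destruct (LR eps Heps) as [d0 [Hd0 K0]].
    exists (Rmin d0 d). split; [apply Rmin_glb_lt; lra|].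
    intros x Hx. generalize (Rmin_l d0 d) (Rmin_r d0 d); intros.
    set (e := INR n0 + sig + 1).
    assert (Hxn : 0 < x ^ n0) by (apply pow_lt; lra).
    assert (Epow : forall t, 0 < t -> Rpower t e = t ^ n0 * Rpower t (sig + 1)).
    { intros t Ht. unfold e. rewrite <- Rpower_pow by auto. rewrite <- Rpower_plus. f_equal; ring. }
    assert (Epow' : forall t, 0 < t -> Rpower t (e - 1) = t ^ n0 * Rpower t sig).
    { intros t Ht. unfold e. rewrite <- Rpower_pow by auto. rewrite <- Rpower_plus. f_equal; ring. }
    assert (BG := BL (fun t => t ^ n0 * w1 t - L1 * Rpower t e)
                     (fun t => t ^ n0 * RR t - L1 * (e * Rpower t (e - 1))) x
                     (x ^ n0 * (eps * Rpower x sig)) (proj1 Hx)).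
    assert (HG : Rabs (x ^ n0 * w1 x - L1 * Rpower x e) <= x ^ n0 * (eps * Rpower x sig) * x).
    { apply BG.
      - intros t Ht. apply is_derive_sub; [apply HW; lra| apply is_derive_cmul_Rpow; lra].
      - intros t Ht. rewrite Epow' by lra.
        replace (t ^ n0 * RR t - L1 * (e * (t ^ n0 * Rpower t sig)))
          with (t ^ n0 * (Rpower t sig * (RR t / Rpower t sig - Q0))).
        2:{ assert (Rpower t sig <> 0) by (apply Rgt_not_eq, Rpow_pos).
            assert (sig + (INR n0 + 1) <> 0) by lra.
            unfold L1, e. field. auto. }
        specialize (K0 t ltac:(lra)).
        rewrite !Rabs_mult, (Rabs_pos_eq (t ^ n0)) by (apply pow_le; lra).
        rewrite (Rabs_pos_eq (Rpower t sig)) by (left; apply Rpow_pos).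
        apply Rmult_le_compat; [apply pow_le; lra| |apply pow_incr; lra|].
        + apply Rmult_le_pos; [left; apply Rpow_pos| apply Rabs_pos].
        + rewrite Rmult_comm. apply Rmult_le_compat; [apply Rabs_pos| left; apply Rpow_pos| lra|].
          apply Rpow_mono_base; lra.
      - apply rlim_sub_cpow; [unfold e; lra| apply rlim_W; auto]. }
    rewrite Epow in HG by lra.
    replace (x ^ n0 * w1 x - L1 * (x ^ n0 * Rpower x (sig + 1)))
      with (x ^ n0 * (w1 x - L1 * Rpower x (sig + 1))) in HG by ring.
    rewrite Rabs_mult, (Rabs_pos_eq (x ^ n0)) in HG by lra.
    rewrite !Rpow_plus1 in HG |- * by lra. apply (Rmult_le_reg_l (x ^ n0)); auto. lra. }
  intros eps Heps. destruct (S1 (eps / 2) ltac:(lra)) as [d0 [Hd0 K0]].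
  exists (Rmin d0 d). split; [apply Rmin_glb_lt; lra|].
  intros x Hx. generalize (Rmin_l d0 d) (Rmin_r d0 d); intros.
  set (C := Q0 / ((sig + 2) * (sig + (INR n0 + 1)))).
  assert (HH : Rabs (w x - C * Rpower x (sig + 2)) <= eps / 2 * Rpower x (sig + 1) * x).
  { apply (BL (fun t => w t - C * Rpower t (sig + 2))
              (fun t => w1 t - C * ((sig + 2) * Rpower t (sig + 2 - 1)))); [lra| | |].
    - intros t Ht. apply is_derive_sub; [apply Hw; lra| apply is_derive_cmul_Rpow; lra].
    - intros t Ht. replace (sig + 2 - 1) with (sig + 1) by ring.
      replace (C * ((sig + 2) * Rpower t (sig + 1))) with (L1 * Rpower t (sig + 1))
        by (unfold C, L1; field; lra).
      eapply Rle_trans; [apply K0; lra|]. apply Rmult_le_compat_l; [lra|].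
      apply Rpow_mono_base; lra.
    - apply rlim_sub_cpow; auto; lra. }
  replace (eps / 2 * Rpower x (sig + 1) * x) with (eps / 2 * Rpower x (sig + 2)) in HH by (replace (sig + 2) with (sig + 1 + 1) by ring; rewrite Rpow_plus1 by lra; ring).
  rewrite Rminus_0_r. unfold Rdiv. rewrite Rabs_mult, Rabs_inv, (Rabs_pos_eq (Rpower x (sig + 2))) by (left; apply Rpow_pos).
  assert (Hp := Rpow_pos x (sig + 2)).
  apply (Rmult_lt_reg_r (Rpower x (sig + 2))); auto.
  rewrite Rmult_assoc, Rinv_l by lra. fold C. nra.
Qed.

Lemma rlim_comp_cont F a h : rlim F a -> continuous h a -> rlim (fun x => h (F x)) (h a).
Proof.
  intros HF Hh. apply rlim_of_filterlim.
  apply (filterlim_comp _ _ _ F h (at_right 0) (locally a) (locally (h a))); auto.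
  apply filterlim_of_rlim; auto.
Qed.

Lemma cont_Rpower a r : 0 < a -> continuous (fun y => Rpower y r) a.
Proof.
  intros Ha. apply (ex_derive_continuous (K:=R_AbsRing) (V:=R_NormedModule)).
  exists (r * Rpower a (r - 1)). apply is_derive_Rpower; auto.
Qed.

Lemma quot_lip f A r : 0 < A -> rlim f A -> rlim (fun x => (f x - A) / x) 0 ->
  rlim (fun x => (Rpower (f x) r - Rpower A r) / x) 0.
Proof.
  intros HA Hf Hq eps Heps.
  set (L := Rabs r * (Rpower (A/2) (r - 1) + Rpower (3*A/2) (r - 1))).
  assert (HL : 0 <= L) by (unfold L; apply Rmult_le_pos; [apply Rabs_pos| generalize (Rpow_pos (A/2) (r-1)) (Rpow_pos (3*A/2) (r-1)); lra]).
  destruct (Hf (A/2) ltac:(lra)) as [d1 [Hd1 K1]].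
  destruct (Hq (eps / (L + 1)) ltac:(apply Rdiv_lt_0_compat; lra)) as [d2 [Hd2 K2]].
  exists (Rmin d1 d2). split; [apply Rmin_glb_lt; lra|].
  intros x Hx. generalize (Rmin_l d1 d2) (Rmin_r d1 d2); intros.
  specialize (K1 x ltac:(lra)). specialize (K2 x ltac:(lra)). rewrite Rminus_0_r in K2 |- *.
  apply Rabs_def2 in K1.
  assert (Lp := Rpow_lip (f x) A r (A/2) (3*A/2) ltac:(lra) ltac:(lra) ltac:(lra)).
  fold L in Lp. unfold Rdiv in *. rewrite Rabs_mult in K2 |- *.
  assert (Hi : 0 <= Rabs (/ x)) by apply Rabs_pos.
  assert (Rabs (Rpower (f x) r - Rpower A r) * Rabs (/ x) <= L * (Rabs (f x - A) * Rabs (/ x))) by nra.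
  assert (L * (Rabs (f x - A) * Rabs (/ x)) <= L * (eps * / (L + 1))) by (apply Rmult_le_compat_l; lra).
  assert (L * (eps * / (L + 1)) < eps).
  { replace (L * (eps * / (L + 1))) with (eps * (L / (L + 1))) by (field; lra).
    assert (L / (L + 1) < 1) by (apply (Rmult_lt_reg_r (L + 1)); [lra|]; unfold Rdiv; rewrite Rmult_assoc, Rinv_l; lra). nra. }
  lra.
Qed.

Lemma E_bound m al be c C uu gg du dg x :
  1 < m -> 0 < c -> c <= uu <= C -> c <= gg <= C -> Rabs dg <= 1 -> 0 < x <= 1 ->
  let r := (1 - m) / m in
  let L1 := Rabs (1/m) * (Rpower c (1/m - 1) + Rpower C (1/m - 1)) in
  let Lr := Rabs r * (Rpower c (r - 1) + Rpower C (r - 1)) in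
  let B := Rpower c r + Rpower C r in
  Rabs (- al * (Rpower uu (1/m) - Rpower gg (1/m))
        - be * x * (du * Rpower uu r / m - dg * Rpower gg r / m))
  <= (Rabs al * L1 + Rabs be / m * (B + Lr)) * (Rabs (uu - gg) + x * Rabs (du - dg)).
Proof.
  intros Hm Hc Hu Hg Hdg Hx r L1 Lr B.
  assert (P1 := Rpow_lip uu gg (1/m) c C Hc Hu Hg). fold L1 in P1.
  assert (P2 := Rpow_lip uu gg r c C Hc Hu Hg). fold Lr in P2.
  assert (P3 := Rpow_bound uu r c C Hc Hu). fold B in P3.
  assert (HU := Rpow_pos uu r).
  assert (HL1 : 0 <= L1) by (unfold L1; apply Rmult_le_pos; [apply Rabs_pos| generalize (Rpow_pos c (1/m-1)) (Rpow_pos C (1/m-1)); lra]).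
  assert (HLr : 0 <= Lr) by (unfold Lr; apply Rmult_le_pos; [apply Rabs_pos| generalize (Rpow_pos c (r-1)) (Rpow_pos C (r-1)); lra]).
  set (D := Rabs (uu - gg)) in *. set (X := Rabs (du - dg)) in *.
  assert (HD : 0 <= D) by apply Rabs_pos. assert (HX : 0 <= X) by apply Rabs_pos.
  assert (T1 : Rabs (- al * (Rpower uu (1/m) - Rpower gg (1/m))) <= Rabs al * L1 * D).
  { rewrite Rabs_mult, Rabs_Ropp. rewrite Rmult_assoc. apply Rmult_le_compat_l; [apply Rabs_pos| exact P1]. }
  assert (Eq : du * Rpower uu r / m - dg * Rpower gg r / m =
               ((du - dg) * Rpower uu r + dg * (Rpower uu r - Rpower gg r)) / m) by (field; lra).
  assert (T2' : Rabs ((du - dg) * Rpower uu r + dg * (Rpower uu r - Rpower gg r)) <= X * B + Lr * D).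
  { eapply Rle_trans; [apply Rabs_triang|]. rewrite !Rabs_mult.
    rewrite (Rabs_pos_eq (Rpower uu r)) by lra. fold X.
    assert (X * Rpower uu r <= X * B) by (apply Rmult_le_compat_l; lra).
    assert (Rabs dg * Rabs (Rpower uu r - Rpower gg r) <= 1 * (Lr * D)).
    { apply Rmult_le_compat; try apply Rabs_pos; lra. }
    lra. }
  assert (T2 : Rabs (be * x * (du * Rpower uu r / m - dg * Rpower gg r / m)) <= Rabs be / m * (B * (x * X) + Lr * D)).
  { rewrite Eq. unfold Rdiv. rewrite !Rabs_mult, Rabs_inv. rewrite (Rabs_pos_eq x) by lra.
    rewrite (Rabs_pos_eq m) by lra.
    assert (0 <= Lr * D) by nra. assert (x * (Lr * D) <= Lr * D) by nra.
    assert (x * (X * B + Lr * D) <= B * (x * X) + Lr * D) by nra.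
    assert (0 <= Rabs be * / m) by (apply Rmult_le_pos; [apply Rabs_pos| left; apply Rinv_0_lt_compat; lra]).
    apply (Rle_trans _ (Rabs be * / m * (x * (X * B + Lr * D)))).
    - assert (Ez : Rabs be * x * (Rabs ((du - dg) * Rpower uu r + dg * (Rpower uu r - Rpower gg r)) * / m)
              = Rabs be * / m * (x * Rabs ((du - dg) * Rpower uu r + dg * (Rpower uu r - Rpower gg r)))) by ring.
      rewrite Ez. apply Rmult_le_compat_l; auto. apply Rmult_le_compat_l; lra.
    - apply Rmult_le_compat_l; auto. }
  unfold Rminus at 1. eapply Rle_trans; [apply Rabs_triang|]. rewrite Rabs_Ropp.
  assert (0 <= Rabs be / m) by (apply Rdiv_le_0_compat; [apply Rabs_pos| lra]).
  assert (0 <= Rabs al * L1) by (apply Rmult_le_pos; [apply Rabs_pos| lra]).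
  assert (0 <= x * X) by nra.
  assert (0 <= B) by (generalize (Rpow_pos c r) (Rpow_pos C r); unfold B; lra).
  assert (0 <= Rabs al * L1 * (x * X)) by (apply Rmult_le_pos; lra).
  assert (0 <= Rabs be / m * B * D) by (apply Rmult_le_pos; [apply Rmult_le_pos|]; lra).
  assert (0 <= Rabs be / m * Lr * (x * X)) by (apply Rmult_le_pos; [apply Rmult_le_pos|]; lra).
  assert (E2 : (Rabs al * L1 + Rabs be / m * (B + Lr)) * (D + x * X) =
    Rabs al * L1 * D + Rabs al * L1 * (x * X) + Rabs be / m * B * D
    + Rabs be / m * (B * (x * X) + Lr * D) + Rabs be / m * Lr * (x * X)) by ring.
  rewrite E2. lra.
Qed.

Lemma taylor_o g d n e : 0 < d -> (forall k x, - d < x < d -> ex_derive_n g k x) ->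
  e < INR (S n) ->
  rlim (fun x => (g x - sum_f_R0 (fun j => Derive_n g j 0 / INR (Factorial.fact j) * x ^ j) n)
                 / Rpower x e) 0.
Proof.
  intros Hd Hg He eps Heps.
  set (D := Derive_n g (S n)).
  assert (CD : continuous D 0).
  { apply (ex_derive_continuous (K:=R_AbsRing) (V:=R_NormedModule)).
    exact (Hg (S (S n)) 0 ltac:(lra)). }
  destruct (rlim_of_cont D CD 1 ltac:(lra)) as [d1 [Hd1 K1]].
  assert (Hf : 0 < INR (Factorial.fact (S n))) by (apply lt_0_INR, Factorial.lt_O_fact).
  set (B := (Rabs (D 0) + 1) / INR (Factorial.fact (S n))).
  assert (HB : 0 <= B) by (unfold B; apply Rdiv_le_0_compat; [generalize (Rabs_pos (D 0)); lra| lra]).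
  destruct (rlim_Rpow (INR (S n) - e) ltac:(lra) (eps / (B + 1)) ltac:(apply Rdiv_lt_0_compat; lra)) as [d2 [Hd2 K2]].
  exists (Rmin d (Rmin d1 d2)). split; [repeat apply Rmin_glb_lt; lra|].
  intros x Hx.
  generalize (Rmin_l d (Rmin d1 d2)) (Rmin_r d (Rmin d1 d2)) (Rmin_l d1 d2) (Rmin_r d1 d2). intros.
  destruct (Taylor_Lagrange g n 0 x ltac:(lra)) as [z [Hz Heq]].
  { intros t Ht k _. apply Hg; lra. }
  assert (Es : sum_f_R0 (fun j => Derive_n g j 0 / INR (Factorial.fact j) * x ^ j) n =
               sum_f_R0 (fun m => (x - 0) ^ m / INR (Factorial.fact m) * Derive_n g m 0) n).
  { apply sum_eq. intros i _. rewrite Rminus_0_r. unfold Rdiv. ring. }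
  rewrite Es, Heq. rewrite !Rminus_0_r.
  replace (sum_f_R0 (fun m => x ^ m / INR (Factorial.fact m) * Derive_n g m 0) n +
      x ^ S n / INR (Factorial.fact (S n)) * Derive_n g (S n) z -
      sum_f_R0 (fun m => x ^ m / INR (Factorial.fact m) * Derive_n g m 0) n)
    with (x ^ S n / INR (Factorial.fact (S n)) * D z) by (unfold D; ring).
  specialize (K1 z ltac:(lra)). specialize (K2 x ltac:(lra)).
  rewrite Rminus_0_r, Rabs_pos_eq in K2 by (left; apply Rpow_pos).
  assert (HDz : Rabs (D z) <= Rabs (D 0) + 1).
  { replace (D z) with ((D z - D 0) + D 0) by ring. eapply Rle_trans; [apply Rabs_triang|]. lra. }
  assert (Ex : x ^ S n = Rpower x e * Rpower x (INR (S n) - e)).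
  { rewrite <- Rpower_plus, <- Rpower_pow by lra. f_equal; ring. }
  assert (Hpe := Rpow_pos x e). assert (Hpe2 := Rpow_pos x (INR (S n) - e)).
  rewrite Ex.
  replace (Rpower x e * Rpower x (INR (S n) - e) / INR (Factorial.fact (S n)) * D z / Rpower x e)
    with (Rpower x (INR (S n) - e) * (D z / INR (Factorial.fact (S n)))) by (field; lra).
  rewrite Rabs_mult, Rabs_pos_eq by lra. unfold Rdiv. rewrite Rabs_mult, Rabs_inv, (Rabs_pos_eq (INR _)) by lra.
  assert (Rabs (D z) * / INR (Factorial.fact (S n)) <= B).
  { unfold B, Rdiv. apply Rmult_le_compat_r; [left; apply Rinv_0_lt_compat; lra| lra]. }
  assert (Rpower x (INR (S n) - e) * (Rabs (D z) * / INR (Factorial.fact (S n))) <= Rpower x (INR (S n) - e) * B) by (apply Rmult_le_compat_l; lra).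
  assert (Rpower x (INR (S n) - e) * (B + 1) < eps).
  { apply (Rmult_lt_compat_r (B + 1)) in K2; [|lra].
    unfold Rdiv in K2. rewrite Rmult_assoc, Rinv_l in K2 by lra. lra. }
  nra.
Qed.

Lemma rlim_minus F G a b : rlim F a -> rlim G b -> rlim (fun x => F x - G x) (a - b).
Proof.
  intros HF HG. assert (H := rlim_plus _ _ _ _ HF (rlim_mult _ _ _ _ (rlim_const (-1)) HG)).
  replace (a + -1 * b) with (a - b) in H by ring.
  eapply rlim_ext; [exact H|]. intros; simpl; ring.
Qed.

Lemma pow_pred_div n x : 0 < x -> INR n * x ^ Nat.pred n = INR n * x ^ n / x.
Proof. intros Hx. destruct n as [|n]; simpl; [field; lra|]. field; lra. Qed.

Lemma core (N : nat) (m sigma p A : R) (n : nat) (f phi : R -> R) (df dphi : R)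
  (HN : (1 <= N)%nat) (Hm : 1 < m) (Hs : 0 < sigma) (Hp : m < p) (HA : 0 < A)
  (Hn : sigma + 2 < INR (S n))
  (Hf : is_f_solution N m sigma p A df f) (Hphi : is_phi_solution N m sigma p A dphi phi) :
  little_o_right (fun x => Rpower (f x) m - sum_f_R0 (fun j => taylorB m phi j * x ^ j) n
       - Rpower A p / ((sigma + 2) * (sigma + INR N)) * Rpower x (sigma + 2)) (sigma + 2).
Proof.
  destruct N as [|n0]; [lia|].
  unfold is_f_solution in Hf.
  destruct Hf as (Hdf & Hfpos & Hf0 & Hfq & HfO & l1 & l2 & Hl1 & Hl2 & Hq1 & Hq2).
  unfold is_phi_solution in Hphi.
  destruct Hphi as (Hdp & Hppos & Hgd & Hp0 & Hpd0 & HpD0 & HpO).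
  set (u := fun x => Rpower (f x) m) in *.
  set (g := fun x => Rpower (phi x) m) in *.
  set (Am := Rpower A m).
  assert (HAm : 0 < Am) by apply Rpow_pos.
  assert (Lf : rlim f A).
  { assert (Hq := rlim_of_filterlim _ _ Hfq).
    assert (H := rlim_plus _ _ _ _ (rlim_const A) (rlim_mult _ _ _ _ (rlim_pow 1) Hq)).
    replace (A + 0 ^ 1 * 0) with A in H by ring.
    eapply rlim_ext; [exact H|]. intros x Hx. rewrite Hf0. simpl. field. lra. }
  assert (Lu : rlim u Am) by exact (rlim_comp_cont f A (fun y => Rpower y m) Lf (cont_Rpower A m HA)).
  assert (l1z : l1 = 0).
  { assert (H1 := rlim_of_filterlim _ _ Hq1).
    assert (Hq := rlim_of_filterlim _ _ Hfq). rewrite Hf0 in Hq, H1.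
    assert (H2 := quot_lip f A m HA Lf Hq).
    exact (rlim_unique _ _ _ H1 H2). }
  subst l1.
  assert (Lu1 : rlim (Derive u) 0) by exact (rlim_of_filterlim _ _ Hl1).
  assert (Hg0 : g 0 = Am) by (unfold g, Am; rewrite Hp0; reflexivity).
  assert (Hphi0 : 0 < phi 0) by (apply Hppos; lra).
  assert (Dg0 : Derive g 0 = 0).
  { apply is_derive_unique.
    assert (H := is_derive_Rpower_comp phi 0 (Derive phi 0) m Hphi0 (Derive_correct _ _ Hpd0)).
    rewrite HpD0, Rmult_0_r in H. exact H. }
  assert (Lg : rlim g Am).
  { rewrite <- Hg0. apply rlim_of_cont.
    apply (ex_derive_continuous (K:=R_AbsRing) (V:=R_NormedModule)).
    exact (Hgd 1%nat 0 ltac:(lra)). }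
  assert (Lg1 : rlim (Derive g) 0).
  { rewrite <- Dg0. apply rlim_of_cont.
    apply (ex_derive_continuous (K:=R_AbsRing) (V:=R_NormedModule)).
    exact (Hgd 2%nat 0 ltac:(lra)). }
  destruct (Lu (Am / 2) ltac:(lra)) as [du [Hdu Ku]].
  destruct (Lg (Am / 2) ltac:(lra)) as [dg [Hdg Kg]].
  destruct (Lg1 1 ltac:(lra)) as [dg1 [Hdg1 Kg1]].
  set (d := Rmin (Rmin 1 df) (Rmin dphi (Rmin du (Rmin dg dg1)))).
  assert (Hd : 0 < d /\ d <= 1 /\ d <= df /\ d <= dphi /\ d <= du /\ d <= dg /\ d <= dg1).
  { unfold d. generalize (Rmin_l (Rmin 1 df) (Rmin dphi (Rmin du (Rmin dg dg1))))
      (Rmin_r (Rmin 1 df) (Rmin dphi (Rmin du (Rmin dg dg1)))) (Rmin_l 1 df) (Rmin_r 1 df)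
      (Rmin_l dphi (Rmin du (Rmin dg dg1))) (Rmin_r dphi (Rmin du (Rmin dg dg1)))
      (Rmin_l du (Rmin dg dg1)) (Rmin_r du (Rmin dg dg1)) (Rmin_l dg dg1) (Rmin_r dg dg1).
    intros. split; [repeat apply Rmin_glb_lt; lra|]. lra. }
  destruct Hd as (Hd0 & Hd1 & Hddf & Hddp & Hddu & Hddg & Hddg1).
  set (c := Am / 2). set (C := 3 * Am / 2).
  assert (Hc : 0 < c) by (unfold c; lra).
  set (al := alpha m sigma p). set (be := beta m sigma p).
  set (r := (1 - m) / m).
  set (L1 := Rabs (1/m) * (Rpower c (1/m - 1) + Rpower C (1/m - 1))).
  set (Lr := Rabs r * (Rpower c (r - 1) + Rpower C (r - 1))).
  set (B := Rpower c r + Rpower C r).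
  set (KE := Rabs al * L1 + Rabs be / m * (B + Lr)).
  set (Kq := Rpower c (p / m) + Rpower C (p / m)).
  assert (HL1 : 0 <= L1) by (unfold L1; apply Rmult_le_pos; [apply Rabs_pos| generalize (Rpow_pos c (1/m-1)) (Rpow_pos C (1/m-1)); lra]).
  assert (HLr : 0 <= Lr) by (unfold Lr; apply Rmult_le_pos; [apply Rabs_pos| generalize (Rpow_pos c (r-1)) (Rpow_pos C (r-1)); lra]).
  assert (HB : 0 <= B) by (generalize (Rpow_pos c r) (Rpow_pos C r); unfold B; lra).
  assert (HKE : 0 <= KE).
  { unfold KE. assert (0 <= Rabs be / m) by (apply Rdiv_le_0_compat; [apply Rabs_pos| lra]).
    assert (0 <= Rabs al * L1) by (apply Rmult_le_pos; [apply Rabs_pos| lra]). nra. }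
  assert (HKq : 0 <= Kq) by (generalize (Rpow_pos c (p/m)) (Rpow_pos C (p/m)); unfold Kq; lra).
  assert (PF : forall x, 0 < x < d ->
     0 < f x /\ 0 < phi x /\ c <= u x <= C /\ c <= g x <= C /\ Rabs (Derive g x) <= 1 /\
     f x = Rpower (u x) (1/m) /\ phi x = Rpower (g x) (1/m) /\
     Rpower (f x) p = Rpower (u x) (p / m) /\
     Derive f x = Derive u x * Rpower (u x) r / m /\
     Derive phi x = Derive g x * Rpower (g x) r / m).
  { intros x Hx.
    assert (Fp : 0 < f x) by (apply Hfpos; lra).
    assert (Pp : 0 < phi x) by (apply Hppos; lra).
    destruct (HfO x ltac:(lra)) as (Exf & Exu & _).
    destruct (HpO x ltac:(lra)) as (Exp & _).
    specialize (Ku x ltac:(lra)). specialize (Kg x ltac:(lra)). specialize (Kg1 x ltac:(lra)).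
    rewrite Rminus_0_r in Kg1. apply Rabs_def2 in Ku. apply Rabs_def2 in Kg.
    assert (Inv : forall y, 0 < y -> y = Rpower (Rpower y m) (1/m)).
    { intros y Hy. rewrite Rpower_mult. replace (m * (1/m)) with 1 by (field; lra).
      rewrite Rpower_1; auto. }
    assert (Der : forall (h : R -> R) y, 0 < h y -> ex_derive h y ->
               Derive h y = Derive (fun t => Rpower (h t) m) y * Rpower (Rpower (h y) m) r / m).
    { intros h y Hy Hex.
      replace (Derive (fun t => Rpower (h t) m) y) with (m * Rpower (h y) (m - 1) * Derive h y)
        by (symmetry; apply is_derive_unique; apply is_derive_Rpower_comp; auto; apply Derive_correct; auto).
      rewrite Rpower_mult.
      replace (m * Rpower (h y) (m - 1) * Derive h y * Rpower (h y) (m * r) / m)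
        with (Derive h y * (Rpower (h y) (m - 1) * Rpower (h y) (m * r))) by (field; lra).
      rewrite <- Rpower_plus. replace (m - 1 + m * r) with 0 by (unfold r; field; lra).
      rewrite Rpower_O by auto. ring. }
    repeat split; try lra.
    - unfold c, C, u in *; lra.
    - unfold c, C, u in *; lra.
    - unfold c, C, g in *; lra.
    - unfold c, C, g in *; lra.
    - apply Inv; auto.
    - apply Inv; auto.
    - unfold u. rewrite Rpower_mult. f_equal. field. lra.
    - apply Der; auto.
    - apply Der; auto. }
  set (w := fun x => u x - g x).
  set (w1 := fun x => Derive u x - Derive g x).
  set (Q := fun x => Rpower (f x) p).
  set (E := fun x => - al * (f x - phi x) - be * x * (Derive f x - Derive phi x)).
  set (RR := fun x => Rpower x sigma * Q x + E x).
  assert (HH : Hyp d sigma (Kq + KE) (Rpower A p) n0 w w1 RR Q E).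
  { unfold Hyp. split; [lra|]. split; [lra|]. split; [|split; [|split; [|split; [|split; [|split]]]]].
    - intros x Hx. destruct (HfO x ltac:(lra)) as (_ & Exu & _).
      apply is_derive_sub; apply Derive_correct; auto.
      exact (Hgd 1%nat x ltac:(lra)).
    - intros x Hx. destruct (HfO x ltac:(lra)) as (Exf & Exu & Exu2 & Ou).
      destruct (HpO x ltac:(lra)) as (Exp & Og).
      assert (D1 : is_derive w1 x (Derive_n u 2 x - Derive_n g 2 x)).
      { apply is_derive_sub; apply Derive_correct; auto. exact (Hgd 2%nat x ltac:(lra)). }
      assert (D2 : is_derive (fun t => t ^ n0) x (INR n0 * 1 * x ^ Nat.pred n0)).
      { apply is_derive_pow. exact (is_derive_id (K:=R_AbsRing) x). }
      assert (D3 := is_derive_mult _ _ _ _ _ D2 D1 (fun a b => Rmult_comm a b)).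
      replace (x ^ n0 * RR x) with (plus (mult (INR n0 * 1 * x ^ Nat.pred n0) (w1 x))
                                         (mult (x ^ n0) (Derive_n u 2 x - Derive_n g 2 x))).
      { exact D3. }
      change (plus ?a ?b) with (a + b). change (mult ?a ?b) with (a * b).
      rewrite S_INR in Ou, Og. replace (INR n0 + 1 - 1) with (INR n0) in Ou, Og by ring.
      assert (U2 : Derive_n u 2 x = - (INR n0 / x * Derive u x) - al * f x - be * x * Derive f x
                                    + Rpower x sigma * Rpower (f x) p) by (unfold al, be; lra).
      assert (G2 : Derive_n g 2 x = - (INR n0 / x * Derive g x) - al * phi x - be * x * Derive phi x)
        by (unfold al, be; lra).
      rewrite U2, G2. rewrite Rmult_1_r, pow_pred_div by lra.
      unfold RR, Q, E, w1. match goal with |- ?a = ?b => change (@eq R a b) end. field. lra.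
    - assert (H := rlim_minus _ _ _ _ Lu Lg). rewrite Rminus_diag in H. exact H.
    - assert (H := rlim_minus _ _ _ _ Lu1 Lg1). rewrite Rminus_0_r in H. exact H.
    - intros; reflexivity.
    - intros x Hx.
      destruct (PF x Hx) as (Fp & Pp & Ub & Gb & Dgb & Fe & Pe & Qe & Dfe & Dpe).
      split.
      + unfold Q. rewrite Qe. rewrite Rabs_pos_eq by (left; apply Rpow_pos).
        assert (Rpower (u x) (p / m) <= Kq) by (apply Rpow_bound; auto).
        lra.
      + unfold E. rewrite Fe, Pe, Dfe, Dpe.
        assert (EB := E_bound m al be c C (u x) (g x) (Derive u x) (Derive g x) x Hm Hc Ub Gb Dgb ltac:(lra)).
        simpl in EB. fold r L1 Lr B KE in EB.
        unfold w, w1.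
        eapply Rle_trans; [exact EB|]. apply Rmult_le_compat_r.
        * assert (0 <= x * Rabs (Derive u x - Derive g x)) by (apply Rmult_le_pos; [lra| apply Rabs_pos]).
          generalize (Rabs_pos (u x - g x)); lra.
        * lra.
    - exact (rlim_comp_cont f A (fun y => Rpower y p) Lf (cont_Rpower A p HA)). }
  assert (WA := w_asym d sigma (Kq + KE) (Rpower A p) n0 w w1 RR Q E HH
                 (ex_intro (fun k => sigma < 2 * INR k) (S n) ltac:(generalize (pos_INR (S n)); lra))).
  assert (TA := taylor_o g dphi n (sigma + 2) Hdp Hgd Hn).
  unfold little_o_right. apply filterlim_of_rlim.
  assert (H := rlim_plus _ _ _ _ WA TA). rewrite Rplus_0_r in H.
  apply (rlim_ext_loc _ _ _ d Hd0 H).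
  intros x Hx. rewrite S_INR.
  assert (Es : sum_f_R0 (fun j => taylorB m phi j * x ^ j) n =
               sum_f_R0 (fun j => Derive_n g j 0 / INR (Factorial.fact j) * x ^ j) n)
    by reflexivity.
  rewrite Es. assert (Hp0' := Rpow_pos x (sigma + 2)).
  generalize (pos_INR n0); intro. unfold w, u. match goal with |- ?a = ?b => change (@eq R a b) end. field. lra.
Qed.

Theorem lemma4p2 (N : nat) (m sigma p A : R) (k0 : nat)
  (f phi : R -> R) (df dphi : R)
  (HN : (1 <= N)%nat) (Hm : 1 < m) (Hsigma : 0 < sigma) (Hp : m < p)
  (HA : 0 < A)
  (Hk0 : INR k0 < sigma <= INR k0 + 1)
  (Hf : is_f_solution N m sigma p A df f)
  (Hphi : is_phi_solution N m sigma p A dphi phi) :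
  ((~ exists n : nat, sigma = INR n) ->
     little_o_right
       (fun x => Rpower (f x) m
          - sum_f_R0 (fun j => taylorB m phi j * x ^ j) (k0 + 2)
          - Rpower A p / ((sigma + 2) * (sigma + INR N))
              * Rpower x (sigma + 2))
       (sigma + 2)) /\
  ((exists n : nat, sigma = INR n) ->
     little_o_right
       (fun x => Rpower (f x) m
          - sum_f_R0 (fun j => taylorB m phi j * x ^ j) (k0 + 3)
          - Rpower A p / ((sigma + 2) * (sigma + INR N))
              * Rpower x (sigma + 2))
       (sigma + 2)).
Proof.
  split.
  - intros Hni. apply (core N m sigma p A (k0 + 2) f phi df dphi); auto.
    assert (sigma <> INR k0 + 1).
    { intros Heq. apply Hni. exists (S k0). rewrite S_INR. exact Heq. }
    rewrite S_INR, plus_INR. simpl (INR 2). lra.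
  - intros _. apply (core N m sigma p A (k0 + 3) f phi df dphi); auto.
    rewrite S_INR, plus_INR. simpl (INR 3). lra.
Qed.
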